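(* Consider the online resource allocation model described in the context, with unknown expected rewards $r_1>r_2$ and adversarial arrivals, and let $\alpha=r_2/r_1$. In each of the following two scenarios, the competitive ratio of any deterministic or randomized algorithm is at most $1/(2-\alpha)$: (Scenario 1) the sampling probability is $p=0$, so no sample information is available; (Scenario 2) sample information is available but the sampling probability $p\in(0,1)$ is completely unknown to the decision-maker.
   Context: Model: a decision-maker has $m$ units of a divisible resource to allocate to unit-demand agents of two types; an accepted type-$i$ agent ($i\in\{1,2\}$) yields a reward in $\{0,1\}$ with mean $r_i\in(0,1)$, $r_1>r_2$, unknown to the decision-maker. An adversary chooses integers $h,\ell\ge0$. Each of the $h+\ell$ agents is independently sampled with probability $p$; $s_1\sim\mathrm{Bin}(h,p)$, $s_2\sim\mathrm{Bin}(\ell,p)$ are the sampled counts, and sampled agents reveal their realized rewards; $\psi$ is this sample information. The remaining $n_1=h-s_1$ type 1 and $n_2=\ell-s_2$ type 2 agents arrive online in an adversarial order $I$; on each arrival the type is observed and the decision-maker irrevocably accepts (possibly fractionally) or rejects, total allocation at most $m$. $\mathrm{OPT}(I)=r_1\min\{n_1,m\}+r_2\min\{n_2,(m-n_1)^+\}$. The competitive ratio of an algorithm $A$ is $\inf_{(h,\ell)}\mathbb E_\psi[\inf_I\mathbb E[\mathrm{REW}_A(I,\psi)]/\mathrm{OPT}(I)]$ (in Scenario 2 the worst case is also over the unknown $p$), where $\mathrm{REW}_A$ is its cumulative expected reward. *)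

(* Defs.v *)
From HB Require Import structures.
From mathcomp Require Import all_boot all_order all_algebra.
From mathcomp Require Import all_classical all_reals all_analysis.

Set Implicit Arguments.
Unset Strict Implicit.
Unset Printing Implicit Defensive.

Import Order.TTheory GRing.Theory Num.Theory.
Local Open Scope classical_set_scope.
Local Open Scope ring_scope.

(* Agent types are encoded as booleans: [true] = type 1, [false] = type 2.  *)

(* Sample information psi: the realized rewards (in {0,1}, encoded as bool)
   of the sampled type-1 agents and of the sampled type-2 agents.  Their
   lengths are s1 and s2. *)
Definition sample_info := (seq bool * seq bool)%type.

(* A (possibly randomized) online algorithm: given a random seed [w] drawn
   from a probability space, the sample information, the types of the agents
   that have arrived so far (in order) and the type of the current arrival,
   it returns the (fractional) amount allocated to the current agent.  It
   knows neither r1, r2, p, h, l nor the future arrivals. *)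
Definition algo (Omega : Type) (R : realType) :=
  Omega -> sample_info -> seq bool -> bool -> R.

Section Model.
Context {R : realType}.

Definition mean_reward (r1 r2 : R) (b : bool) : R := if b then r1 else r2.

Definition alloc {Omega : Type} (A : algo Omega R) (w : Omega)
  (psi : sample_info) (I : seq bool) (t : nat) : R :=
  A w psi (take t I) (nth true I t).

Definition feasible_alg {Omega : Type} (m : nat) (A : algo Omega R) : Prop :=
  forall w psi I,
    (forall t, (t < size I)%N -> 0 <= alloc A w psi I t <= 1) /\
    \sum_(t < size I) alloc A w psi I t <= m%:R.

Definition measurable_alg {d} {Omega : measurableType d} (A : algo Omega R)
  : Prop :=
  forall psi pre cur, measurable_fun setT (fun w => A w psi pre cur).

(* cumulative expected reward (expectation over reward realizations) *)
Definition REW {Omega : Type} (r1 r2 : R) (A : algo Omega R) (w : Omega)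
  (psi : sample_info) (I : seq bool) : R :=
  \sum_(t < size I) mean_reward r1 r2 (nth true I t) * alloc A w psi I t.

Definition exp_REW {d} {Omega : measurableType d} (P : probability Omega R)
  (r1 r2 : R) (A : algo Omega R) (psi : sample_info) (I : seq bool) : R :=
  fine (\int[P]_w (REW r1 r2 A w psi I)%:E)%E.

Definition OPT (m : nat) (r1 r2 : R) (n1 n2 : nat) : R :=
  r1 * (minn n1 m)%:R + r2 * (minn n2 (m - n1))%:R.

Definition arrivals (n1 n2 : nat) : set (seq bool) :=
  [set I | count_mem true I = n1 /\ count_mem false I = n2].

(* ratio REW/OPT, with the convention 0/0 = 1 (when OPT = 0 nothing can be
   earned) *)
Definition ratio {d} {Omega : measurableType d} (P : probability Omega R)
  (m : nat) (r1 r2 : R) (A : algo Omega R) (psi : sample_info)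
  (I : seq bool) : R :=
  let o := OPT m r1 r2 (count_mem true I) (count_mem false I) in
  if o == 0 then 1 else exp_REW P r1 r2 A psi I / o.

Definition worst_order {d} {Omega : measurableType d}
  (P : probability Omega R) (m : nat) (r1 r2 : R) (A : algo Omega R)
  (psi : sample_info) (n1 n2 : nat) : R :=
  inf [set ratio P m r1 r2 A psi I | I in arrivals n1 n2].

Definition samp_prob (p : R) (h s : nat) : R :=
  'C(h, s)%:R * p ^+ s * (1 - p) ^+ (h - s).

Definition seq_prob (q : R) (b : seq bool) : R :=
  \prod_(x <- b) (if x then q else 1 - q).

Definition exp_over_samples {d} {Omega : measurableType d}
  (P : probability Omega R) (m : nat) (r1 r2 : R) (A : algo Omega R)
  (p : R) (h l : nat) : R :=
  \sum_(s1 < h.+1) \sum_(b1 : s1.-tuple bool)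
  \sum_(s2 < l.+1) \sum_(b2 : s2.-tuple bool)
    samp_prob p h s1 * seq_prob r1 b1 * (samp_prob p l s2 * seq_prob r2 b2) *
    worst_order P m r1 r2 A (tval b1, tval b2) (h - s1) (l - s2).

Definition comp_ratio {d} {Omega : measurableType d}
  (P : probability Omega R) (m : nat) (r1 r2 : R) (A : algo Omega R)
  (p : R) : R :=
  inf [set exp_over_samples P m r1 r2 A p hl.1 hl.2 | hl in [set: nat * nat]].

Definition comp_ratio_unknown_p {d} {Omega : measurableType d}
  (P : probability Omega R) (m : nat) (r1 r2 : R) (A : algo Omega R) : R :=
  inf [set comp_ratio P m r1 r2 A p | p in [set p : R | 0 < p < 1]].

End Model.

(* Main.v *)
Require Import Defs.
From HB Require Import structures.
From mathcomp Require Import all_boot all_order all_algebra.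
From mathcomp Require Import all_classical all_reals all_analysis.
From mathcomp Require Import measurable_realfun lebesgue_measure lebesgue_integral.
From mathcomp Require Import ring lra.
Import Order.TTheory GRing.Theory Num.Theory.
Local Open Scope ring_scope.

Section H.
Variable R : realType.

Lemma sum_tuple_prod n (f : bool -> R) :
  \sum_(b : n.-tuple bool) \prod_(x <- b) f x = (f true + f false) ^+ n.
Proof.
under eq_bigr do rewrite big_tuple.
rewrite (reindex (@tuple_of_finfun bool n)); last first.
  by exists (@finfun_of_tuple bool n) => x _; [rewrite tuple_of_finfunK|rewrite finfun_of_tupleK].
under eq_bigr do under eq_bigr do rewrite tnth_mktuple.
rewrite -(bigA_distr_bigA (fun (i : 'I_n) (j : bool) => f j)) /=.
under eq_bigr do rewrite big_bool /=.
by rewrite prodr_const card_ord addrC.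
Qed.
End H.
Section H2.
Variable R : realType.

Lemma sum_samp (p : R) h : \sum_(s < h.+1) samp_prob p h s = 1.
Proof.
rewrite [RHS](_ : 1 = ((1 - p) + p) ^+ h); last by rewrite subrK expr1n.
rewrite exprDn; apply: eq_bigr => i _; rewrite /samp_prob.
by rewrite -mulr_natl; ring.
Qed.

Lemma samp_ge0 (p : R) h s : 0 <= p <= 1 -> 0 <= samp_prob p h s.
Proof.
move=> /andP[p0 p1]; rewrite /samp_prob.
by rewrite !mulr_ge0 // exprn_ge0 // subr_ge0.
Qed.

Lemma seq_prob_ge0 (q : R) b : 0 <= q <= 1 -> 0 <= seq_prob q b.
Proof.
move=> /andP[q0 q1]; rewrite /seq_prob; apply: prodr_ge0 => -[]//= _.
by rewrite subr_ge0.
Qed.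

Lemma one_minus_pow (p : R) n : 0 <= p <= 1 -> 1 - (1 - p) ^+ n <= n%:R * p.
Proof.
move=> /andP[p0 p1]; elim: n => [|n IH]; first by rewrite expr0 subrr mul0r.
have q0 : 0 <= 1 - p by rewrite subr_ge0.
have q1 : (1 - p) ^+ n <= 1 by apply: exprn_ile1 => //; lra.
rewrite exprS -natr1.
have h1 : p * (1 - p) ^+ n <= p by rewrite -[leRHS]mulr1 ler_wpM2l.
nra.
Qed.
End H2.
Section I.
Variables (R : realType) (d : measure_display) (Omega : measurableType d)
  (P : probability Omega R).

Lemma fine_int_ge0 (f : Omega -> R) : (forall w, 0 <= f w) ->
  0 <= fine (\int[P]_w (f w)%:E)%E.
Proof. by move=> f0; apply/fine_ge0/integral_ge0 => w _; rewrite lee_fin. Qed.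

Lemma int_comb (f g : Omega -> R) (k c : R) :
  measurable_fun setT f -> measurable_fun setT g ->
  (forall w, 0 <= f w) -> (forall w, 0 <= g w) -> 0 <= k ->
  (forall w, f w + k * g w <= c) ->
  fine (\int[P]_w (f w)%:E)%E + k * fine (\int[P]_w (g w)%:E)%E <= c.
Proof.
move=> mf mg f0 g0 k0 fgc.
have mfE : measurable_fun setT (EFin \o f) by exact/measurable_EFinP.
have mgE : measurable_fun setT (EFin \o g) by exact/measurable_EFinP.
have H : (\int[P]_w ((f w)%:E + k%:E * (g w)%:E) <= c%:E)%E.
  apply: (@le_trans _ _ (\int[P]_w (cst c%:E) w)%E).
    apply: ge0_le_integral => //.
    - by move=> w _; rewrite adde_ge0 // ?mule_ge0 // lee_fin.
    - by apply: emeasurable_funD => //; apply: emeasurable_funM => //.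
    - by move=> w _; rewrite -EFinM -EFinD lee_fin.
  rewrite integral_cst //.
  rewrite [X in (_ * X)%E](_ : _ = 1%E); last exact: probability_setT.
  by rewrite mule1.
rewrite ge0_integralD // in H; last 3 first.
- by move=> w _; rewrite lee_fin.
- by move=> w _; rewrite mule_ge0 // lee_fin.
- by apply: emeasurable_funM => //.
rewrite ge0_integralZl // in H; last by move=> w _; rewrite lee_fin.
have a0 : (0 <= \int[P]_w (f w)%:E)%E by apply: integral_ge0 => w _; rewrite lee_fin.
have b0 : (0 <= \int[P]_w (g w)%:E)%E by apply: integral_ge0 => w _; rewrite lee_fin.
move: H a0 b0.
move: (\int[P]_w (f w)%:E)%E (\int[P]_w (g w)%:E)%E => a b H a0 b0.
have Ha : (a <= c%:E)%E by apply: le_trans H; apply: leeDl; apply: mule_ge0.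
case: a a0 H Ha => [a| |] a0 H Ha //; case: b b0 H => [b| |] b0 H //=.
- by rewrite mulr0 addr0 -lee_fin.
Qed.
End I.
Section E.
Variables (R : realType) (d : measure_display) (Omega : measurableType d)
  (P : probability Omega R) (m : nat) (A : algo Omega R) (r1 r2 : R).

Lemma sum_seq_prob (q : R) n : \sum_(b : n.-tuple bool) seq_prob q b = 1.
Proof. by rewrite /seq_prob sum_tuple_prod /= addrC subrK expr1n. Qed.

Lemma le_sum_first (I : finType) (i0 : I) (G : I -> R) :
  (forall i, G i <= 0) -> \sum_i G i <= G i0.
Proof.
move=> G0; rewrite (bigD1 i0) //= -[leRHS]addr0 lerD2l.
by apply: sumr_le0 => i _.
Qed.

Lemma E_bound (p C : R) h l : 0 <= p <= 1 -> 0 <= r1 <= 1 -> 0 <= r2 <= 1 ->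
  (forall psi n1 n2, worst_order P m r1 r2 A psi n1 n2 <= C) ->
  exp_over_samples P m r1 r2 A p h l <=
  (1 - p) ^+ (h + l) * worst_order P m r1 r2 A ([::], [::]) h l
  + C * (1 - (1 - p) ^+ (h + l)).
Proof.
move=> hp hr1 hr2 WC.
set w := fun (s1 : 'I_h.+1) (b1 : s1.-tuple bool) (s2 : 'I_l.+1) (b2 : s2.-tuple bool) =>
  samp_prob p h s1 * seq_prob r1 b1 * (samp_prob p l s2 * seq_prob r2 b2).
have Ws : \sum_(s1 < h.+1) \sum_(b1 : s1.-tuple bool)
  \sum_(s2 < l.+1) \sum_(b2 : s2.-tuple bool) w s1 b1 s2 b2 = 1.
  rewrite -(@sum_samp _ p h); apply: eq_bigr => s1 _.
  rewrite -[RHS]mulr1 -(sum_seq_prob r1 s1) mulr_sumr; apply: eq_bigr => b1 _.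
  rewrite -[RHS]mulr1 -(@sum_samp _ p l) mulr_sumr; apply: eq_bigr => s2 _.
  rewrite -[RHS]mulr1 -(sum_seq_prob r2 s2) !mulr_sumr; apply: eq_bigr => b2 _.
  by rewrite /w; ring.
have E : exp_over_samples P m r1 r2 A p h l - C =
  \sum_(s1 < h.+1) \sum_(b1 : s1.-tuple bool)
  \sum_(s2 < l.+1) \sum_(b2 : s2.-tuple bool) w s1 b1 s2 b2 *
    (worst_order P m r1 r2 A (tval b1, tval b2) (h - s1) (l - s2) - C).
  rewrite -{1}[C]mulr1 -Ws /exp_over_samples mulr_sumr -sumrB; apply: eq_bigr => s1 _.
  rewrite mulr_sumr -sumrB; apply: eq_bigr => b1 _.
  rewrite mulr_sumr -sumrB; apply: eq_bigr => s2 _.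
  rewrite mulr_sumr -sumrB; apply: eq_bigr => b2 _.
  by rewrite /w; ring.
have w0 s1 b1 s2 b2 : 0 <= w s1 b1 s2 b2.
  have := @samp_ge0 _ p h s1 hp; have := @samp_ge0 _ p l s2 hp.
  have := @seq_prob_ge0 _ r1 b1 hr1; have := @seq_prob_ge0 _ r2 b2 hr2.
  by rewrite /w => *; apply: mulr_ge0; apply: mulr_ge0.
have T0 s1 b1 s2 b2 : w s1 b1 s2 b2 *
    (worst_order P m r1 r2 A (tval b1, tval b2) (h - s1) (l - s2) - C) <= 0.
  by rewrite mulr_ge0_le0 // subr_le0.
suff : \sum_(s1 < h.+1) \sum_(b1 : s1.-tuple bool)
  \sum_(s2 < l.+1) \sum_(b2 : s2.-tuple bool) w s1 b1 s2 b2 *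
    (worst_order P m r1 r2 A (tval b1, tval b2) (h - s1) (l - s2) - C)
  <= (1 - p) ^+ (h + l) * (worst_order P m r1 r2 A ([::], [::]) h l - C).
  by rewrite -E; nra.
pose T4 (s1 : 'I_h.+1) (b1 : s1.-tuple bool) (s2 : 'I_l.+1) (b2 : s2.-tuple bool) :=
  w s1 b1 s2 b2 * (worst_order P m r1 r2 A (tval b1, tval b2) (h - s1) (l - s2) - C).
pose T3 (s1 : 'I_h.+1) (b1 : s1.-tuple bool) (s2 : 'I_l.+1) := \sum_(b2 : s2.-tuple bool) T4 s1 b1 s2 b2.
pose T2 (s1 : 'I_h.+1) (b1 : s1.-tuple bool) := \sum_(s2 < l.+1) T3 s1 b1 s2.
pose T1 (s1 : 'I_h.+1) := \sum_(b1 : s1.-tuple bool) T2 s1 b1.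
have T3le s1 b1 s2 : T3 s1 b1 s2 <= 0 by apply: sumr_le0 => b2 _; exact: T0.
have T2le s1 b1 : T2 s1 b1 <= 0 by apply: sumr_le0 => s2 _; exact: T3le.
have T1le s1 : T1 s1 <= 0 by apply: sumr_le0 => b1 _; exact: T2le.
change (\sum_(s1 < h.+1) T1 s1 <= (1 - p) ^+ (h + l) * (worst_order P m r1 r2 A ([::], [::]) h l - C)).
apply: le_trans (@le_sum_first _ ord0 T1 T1le) _.
apply: le_trans (@le_sum_first _ [tuple] (T2 ord0) (T2le ord0)) _.
apply: le_trans (@le_sum_first _ ord0 (T3 ord0 [tuple]) (T3le ord0 [tuple])) _.
apply: le_trans (@le_sum_first _ [tuple] (T4 ord0 [tuple] ord0) (T0 ord0 [tuple] ord0)) _.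
rewrite /T4 /w /= !subn0 /samp_prob /seq_prob !big_nil !bin0 !expr0 !mulr1 !mul1r.
by rewrite !subn0 exprD.
Qed.
End E.
Section G.
Variable R : realType.

Lemma inf_le_mem (S : set R) x : (forall y, S y -> 0 <= y) -> S x -> inf S <= x.
Proof. by move=> h Sx; apply: ge_inf => //; exists 0 => y /h. Qed.

Lemma inf_ge0 (S : set R) : (forall y, S y -> 0 <= y) -> 0 <= inf S.
Proof.
move=> h; have [->|/set0P ne] := eqVneq S set0; first by rewrite inf0.
by apply: lb_le_inf => // y /h.
Qed.

Lemma final_ineq (r1 r2 a b : R) : 0 < r2 -> r2 < r1 ->
  (r1 - r2) * a + r1 * b <= r1 -> a <= 1 / (2 - r2 / r1) \/ b <= 1 / (2 - r2 / r1).
Proof.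
move=> r20 r21 H.
have r10 : 0 < r1 by lra.
have -> : 1 / (2 - r2 / r1) = r1 / (2 * r1 - r2).
  by field; apply/andP; split; [lra| rewrite gt_eqF //; lra].
have D : 0 < 2 * r1 - r2 by lra.
have [ab|ba] := lerP a b.
  by left; rewrite ler_pdivlMr //; nra.
by right; rewrite ler_pdivlMr //; nra.
Qed.
End G.
Section M.
Variables (R : realType) (m : nat) (d : measure_display)
  (Omega : measurableType d) (P : probability Omega R) (A : algo Omega R).
Hypotheses (m0 : (0 < m)%N) (fA : feasible_alg m A) (mA : measurable_alg A).
Variables (r1 r2 : R).
Hypotheses (r20 : 0 < r2) (r21 : r2 < r1) (r11 : r1 < 1).
Ltac mlra := have := r20; have := r21; have := r11; lra.

Lemma meas_REW psi I : measurable_fun setT (fun w => REW r1 r2 A w psi I).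
Proof.
rewrite /REW; apply: measurable_sum => t.
apply: measurable_funM; first exact: measurable_cst.
exact: mA.
Qed.

Lemma REW_ge0 w psi I : 0 <= REW r1 r2 A w psi I.
Proof.
have [H _] := fA w psi I.
rewrite /REW; apply: sumr_ge0 => t _; apply: mulr_ge0.
  by rewrite /mean_reward; case: ifP => _; mlra.
by case/andP: (H t (ltn_ord t)).
Qed.

Lemma REW_le w psi I : REW r1 r2 A w psi I <= r1 * m%:R.
Proof.
have [H S] := fA w psi I.
rewrite /REW; apply: le_trans (_ : _ <= r1 * \sum_(t < size I) alloc A w psi I t) _.
  rewrite mulr_sumr; apply: ler_sum => t _; apply: ler_wpM2r.
    by case/andP: (H t (ltn_ord t)).
  by rewrite /mean_reward; case: ifP => _; mlra.
by apply: ler_wpM2l => //; mlra.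
Qed.

Lemma expREW_ge0 psi I : 0 <= exp_REW P r1 r2 A psi I.
Proof. by apply: fine_int_ge0 => w; apply: REW_ge0. Qed.

Lemma expREW_le psi I : exp_REW P r1 r2 A psi I <= r1 * m%:R.
Proof.
have := @int_comb R d Omega P (fun w => REW r1 r2 A w psi I) (fun _ => 0) 0 (r1 * m%:R).
move=> /(_ (meas_REW psi I) (measurable_cst _) (fun w => REW_ge0 w psi I)
  (fun=> lexx 0) (lexx 0)) H.
rewrite !mul0r !addr0 in H; apply: H => w; rewrite addr0; exact: REW_le.
Qed.

Lemma OPT_ge0 n1 n2 : 0 <= OPT m r1 r2 n1 n2.
Proof. by rewrite /OPT addr_ge0 // mulr_ge0 //; mlra. Qed.

Lemma OPT_lb n1 n2 : OPT m r1 r2 n1 n2 != 0 -> r2 <= OPT m r1 r2 n1 n2.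
Proof.
rewrite /OPT; case: (minn n1 m) => [|k].
  rewrite mulr0 add0r; case: (minn n2 (m - n1)) => [|j]; first by rewrite mulr0 eqxx.
  move=> _; rewrite -[leLHS]mulr1 ler_wpM2l //; first mlra.
  by rewrite ler1n.
move=> _; apply: le_trans (_ : r1 <= _).
  mlra.
rewrite -[leLHS]addr0 lerD //; last by rewrite mulr_ge0 //; mlra.
by rewrite -[leLHS]mulr1 ler_wpM2l ?ler1n //; mlra.
Qed.

Definition Cb : R := 1 + r1 * m%:R / r2.

Lemma ratio_ge0 psi I : 0 <= Defs.ratio P m r1 r2 A psi I.
Proof.
rewrite /Defs.ratio; case: ifP => // _.
by rewrite divr_ge0 ?expREW_ge0 ?OPT_ge0.
Qed.

Lemma ratio_le psi I : Defs.ratio P m r1 r2 A psi I <= Cb.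
Proof.
rewrite /Defs.ratio /Cb; case: ifP => [_|/negbT H].
  by rewrite lerDl divr_ge0 // ?mulr_ge0 //; mlra.
apply: le_trans (_ : _ <= r1 * m%:R / r2) _; last by rewrite lerDr.
have hO := @OPT_lb _ _ H.
apply: ler_pM.
- exact: expREW_ge0.
- by rewrite invr_ge0 OPT_ge0.
- exact: expREW_le.
- by rewrite lef_pV2 ?posrE //; mlra.
Qed.

Lemma arrivals_ne n1 n2 : arrivals n1 n2 (nseq n1 true ++ nseq n2 false).
Proof. by split; rewrite count_cat !count_nseq /= ?mul1n ?mul0n ?addn0. Qed.

Lemma worst_ge0 psi n1 n2 : 0 <= worst_order P m r1 r2 A psi n1 n2.
Proof. by apply: inf_ge0 => y [I _ <-]; apply: ratio_ge0. Qed.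

Lemma worst_le_ratio psi n1 n2 I : arrivals n1 n2 I ->
  worst_order P m r1 r2 A psi n1 n2 <= Defs.ratio P m r1 r2 A psi I.
Proof.
move=> hI; apply: inf_le_mem; first by move=> y [J _ <-]; apply: ratio_ge0.
by exists I.
Qed.

Lemma worst_le psi n1 n2 : worst_order P m r1 r2 A psi n1 n2 <= Cb.
Proof.
apply: le_trans (@worst_le_ratio psi n1 n2 _ (arrivals_ne n1 n2)) _.
exact: ratio_le.
Qed.


Lemma REW_nat w psi I : REW r1 r2 A w psi I =
  \sum_(0 <= t < size I) mean_reward r1 r2 (nth true I t) * alloc A w psi I t.
Proof. by rewrite /REW big_mkord. Qed.

Lemma alloc_nat w psi I : \sum_(0 <= t < size I) alloc A w psi I t <= m%:R.
Proof. by rewrite big_mkord; have [_ ->] := fA w psi I. Qed.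

Lemma pointwise w psi :
  REW r1 r2 A w psi (nseq m false ++ nseq m true) +
  (r1 - r2) / r2 * REW r1 r2 A w psi (nseq m false) <= r1 * m%:R.
Proof.
pose I1 := nseq m false; pose I2 := nseq m false ++ nseq m true.
change (REW r1 r2 A w psi I2 + (r1 - r2) / r2 * REW r1 r2 A w psi I1 <= r1 * m%:R).
have s2 : size I2 = (m + m)%N by rewrite /I2 size_cat !size_nseq.
have s1 : size I1 = m by rewrite /I1 size_nseq.
have eqa t : (t < m)%N -> alloc A w psi I2 t = alloc A w psi I1 t.
  move=> tm; rewrite /alloc /I1 /I2 take_cat nth_cat size_nseq tm //.
have nth1 t : (t < m)%N -> nth true I2 t = false.
  by move=> tm; rewrite /I2 nth_cat size_nseq tm nth_nseq tm.
have nth1' t : (t < m)%N -> nth true I1 t = false.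
  by move=> tm; rewrite /I1 nth_nseq tm.
have nth2 t : nth true (nseq m false ++ nseq m true) t = true \/ (t < m)%N.
  rewrite nth_cat size_nseq; case: ltnP => tm; [by right | left].
  by rewrite nth_nseq; case: ifP.
have F := alloc_nat w psi I2.
rewrite s2 (@big_cat_nat _ _ _ m) //= ?leq_addr // in F.
rewrite !REW_nat s1 s2 (@big_cat_nat _ _ _ m) //= ?leq_addr //.
rewrite (@eq_big_nat _ _ _ 0 m _ (fun t => r2 * alloc A w psi I1 t)); last first.
  by move=> t /andP[_ tm]; rewrite nth1 // eqa.
rewrite (@eq_big_nat _ _ _ m (m + m) _ (fun t => r1 * alloc A w psi I2 t)); last first.
  move=> t /andP[mt _]; case: (nth2 t) => [->//|tm].
  by move: (leq_ltn_trans mt tm); rewrite ltnn.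
rewrite (@eq_big_nat _ _ _ 0 m (fun t => mean_reward r1 r2 (nth true I1 t) * alloc A w psi I1 t) (fun t => r2 * alloc A w psi I1 t)); last first.
  by move=> t /andP[_ tm]; rewrite nth1'.
rewrite (@eq_big_nat _ _ _ 0 m (fun t => alloc A w psi I2 t) (fun t => alloc A w psi I1 t)) in F; last first.
  by move=> t /andP[_ tm]; rewrite eqa.
rewrite -!mulr_sumr.
set S1 := \sum_(0 <= t < m) alloc A w psi I1 t in F *.
set S2 := \sum_(m <= t < m + m) alloc A w psi I2 t in F *.
have -> : r2 * S1 + r1 * S2 + (r1 - r2) / r2 * (r2 * S1) = r1 * (S1 + S2).
  by field; apply/negP => /eqP H; move: r20; rewrite H ltxx.
by apply: ler_wpM2l => //; mlra.
Qed.


Lemma key_instance :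
  worst_order P m r1 r2 A ([::], [::]) 0 m <= 1 / (2 - r2 / r1) \/
  worst_order P m r1 r2 A ([::], [::]) m m <= 1 / (2 - r2 / r1).
Proof.
set psi : sample_info := ([::], [::]).
have a1 : arrivals 0 m (nseq m false).
  by split; rewrite count_nseq /= ?mul0n ?mul1n.
have a2 : arrivals m m (nseq m false ++ nseq m true).
  by split; rewrite count_cat !count_nseq /= ?mul0n ?mul1n ?addn0.
have mpos : 0 < (m%:R : R) by rewrite ltr0n.
have O1 : OPT m r1 r2 0 m = r2 * m%:R.
  by rewrite /OPT min0n mulr0 add0r subn0 minnn.
have O2 : OPT m r1 r2 m m = r1 * m%:R.
  by rewrite /OPT minnn subnn minn0 mulr0 addr0.
have R1 : Defs.ratio P m r1 r2 A psi (nseq m false) =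
    exp_REW P r1 r2 A psi (nseq m false) / (r2 * m%:R).
  rewrite /Defs.ratio; case: a1 => -> ->; rewrite O1 ifF //.
  by apply/negbTE; rewrite mulf_neq0 // gt_eqF //.
have R2 : Defs.ratio P m r1 r2 A psi (nseq m false ++ nseq m true) =
    exp_REW P r1 r2 A psi (nseq m false ++ nseq m true) / (r1 * m%:R).
  rewrite /Defs.ratio; case: a2 => -> ->; rewrite O2 ifF //.
  by apply/negbTE; rewrite mulf_neq0 // gt_eqF //; mlra.
have W1 := @worst_le_ratio psi _ _ _ a1; have W2 := @worst_le_ratio psi _ _ _ a2.
rewrite R1 in W1; rewrite R2 in W2.
have C := @int_comb R d Omega P (fun w => REW r1 r2 A w psi (nseq m false ++ nseq m true))
  (fun w => REW r1 r2 A w psi (nseq m false)) ((r1 - r2) / r2) (r1 * m%:R)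
  (meas_REW _ _) (meas_REW _ _) (fun w => REW_ge0 w _ _) (fun w => REW_ge0 w _ _).
have k0 : 0 <= (r1 - r2) / r2 by rewrite divr_ge0 //; mlra.
have {C} := C k0 (fun w => pointwise w psi).
rewrite -/(exp_REW P r1 r2 A psi _) -/(exp_REW P r1 r2 A psi _).
move: (exp_REW P r1 r2 A psi (nseq m false ++ nseq m true))
      (exp_REW P r1 r2 A psi (nseq m false)) W1 W2 => y x W1 W2 Hc.
have : (r1 - r2) * (x / (r2 * m%:R)) + r1 * (y / (r1 * m%:R)) <= r1.
  have -> : (r1 - r2) * (x / (r2 * m%:R)) + r1 * (y / (r1 * m%:R)) =
            (y + (r1 - r2) / r2 * x) / m%:R.
    field; apply/and3P; split; rewrite ?gt_eqF //; mlra.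
  by rewrite ler_pdivrMr.
move/final_ineq => /(_ r20 r21) [H|H]; [left|right]; exact: le_trans H.
Qed.


Lemma exp_ge0 p h l : 0 <= p <= 1 -> 0 <= exp_over_samples P m r1 r2 A p h l.
Proof.
move=> hp; have hr1 : 0 <= r1 <= 1 by apply/andP; split; mlra.
have hr2 : 0 <= r2 <= 1 by apply/andP; split; mlra.
apply: sumr_ge0 => s1 _; apply: sumr_ge0 => b1 _.
apply: sumr_ge0 => s2 _; apply: sumr_ge0 => b2 _.
apply: mulr_ge0; last exact: worst_ge0.
apply: mulr_ge0; apply: mulr_ge0; by [apply: samp_ge0|apply: seq_prob_ge0].
Qed.

Lemma Cb_ge0 : 0 <= Cb.
Proof. by rewrite /Cb addr_ge0 // divr_ge0 // ?mulr_ge0 //; mlra. Qed.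

Lemma exp_bound p h l : 0 <= p <= 1 ->
  exp_over_samples P m r1 r2 A p h l <=
  worst_order P m r1 r2 A ([::], [::]) h l + Cb * (h + l)%:R * p.
Proof.
move=> hp; have hr1 : 0 <= r1 <= 1 by apply/andP; split; mlra.
have hr2 : 0 <= r2 <= 1 by apply/andP; split; mlra.
apply: le_trans (@E_bound R d Omega P m A r1 r2 p Cb h l hp hr1 hr2 (@worst_le)) _.
have W0 := @worst_ge0 ([::], [::]) h l.
have q1 : (1 - p) ^+ (h + l) <= 1.
  by case/andP: hp => p0 p1; apply: exprn_ile1; lra.
have q0 : 0 <= (1 - p) ^+ (h + l).
  by case/andP: hp => p0 p1; apply: exprn_ge0; lra.
have B := @one_minus_pow R p (h + l) hp.
have Cb0 := Cb_ge0.
rewrite -mulrA; apply: lerD.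
  by rewrite -[leRHS]mul1r ler_wpM2r.
by apply: ler_wpM2l.
Qed.

Lemma CR_bound p : 0 <= p <= 1 ->
  comp_ratio P m r1 r2 A p <= 1 / (2 - r2 / r1) + Cb * (m + m)%:R * p.
Proof.
move=> hp.
have Cb0 := Cb_ge0.
have p0 : 0 <= p by case/andP: hp.
have le_pm h l : (h + l <= m + m)%N -> Cb * (h + l)%:R * p <= Cb * (m + m)%:R * p.
  move=> hlm; apply: ler_wpM2r => //; apply: ler_wpM2l => //.
  by rewrite ler_nat.
case: key_instance => H.
  apply: (@le_trans _ _ (exp_over_samples P m r1 r2 A p 0 m)).
    rewrite /comp_ratio; apply: inf_le_mem; last by exists (0%N, m).
    by move=> y [hl _ <-]; apply: exp_ge0.
  apply: le_trans (exp_bound p 0 m hp) _; apply: lerD => //.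
  by apply: le_pm; rewrite add0n leq_addl.
apply: (@le_trans _ _ (exp_over_samples P m r1 r2 A p m m)).
  rewrite /comp_ratio; apply: inf_le_mem; last by exists (m, m).
  by move=> y [hl _ <-]; apply: exp_ge0.
apply: le_trans (exp_bound p m m hp) _; apply: lerD => //.
Qed.

Lemma main_both :
  comp_ratio P m r1 r2 A 0 <= 1 / (2 - r2 / r1) /\
  comp_ratio_unknown_p P m r1 r2 A <= 1 / (2 - r2 / r1).
Proof.
split.
  have := @CR_bound 0; rewrite mulr0 addr0; apply.
  by rewrite lexx ler01.
apply/ler_addgt0Pr => e e0.
set K := Cb * (m + m)%:R.
have K0 : 0 <= K by rewrite /K mulr_ge0 // Cb_ge0.
set p := e / (K + e + 1).
have D : 0 < K + e + 1 by lra.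
have p0 : 0 < p by rewrite /p divr_gt0.
have p1 : p < 1 by rewrite /p ltr_pdivrMr // mul1r; lra.
have Kp : K * p <= e.
  rewrite /p mulrA ler_pdivrMr //; nra.
have hp : 0 <= p <= 1 by apply/andP; split; lra.
apply: (@le_trans _ _ (comp_ratio P m r1 r2 A p)).
  apply: inf_le_mem; last by exists p => //; apply/andP; split.
  move=> y [q /andP[q0 q1] <-]; apply: inf_ge0 => z [hl _ <-].
  by apply: exp_ge0; apply/andP; split; lra.
apply: le_trans (@CR_bound p hp) _.
by rewrite -/K lerD2l.
Qed.

End M.

Theorem proposition1 (R : realType) (m : nat) (d : measure_display)
  (Omega : measurableType d) (P : probability Omega R) (A : algo Omega R) :
  (0 < m)%N -> feasible_alg m A -> measurable_alg A ->
  forall r1 r2 : R, 0 < r2 -> r2 < r1 -> r1 < 1 ->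
    comp_ratio P m r1 r2 A 0 <= 1 / (2 - r2 / r1) /\
    comp_ratio_unknown_p P m r1 r2 A <= 1 / (2 - r2 / r1).
Proof.
move=> m0 fA mA r1 r2 r20 r21 r11.
exact: main_both.
Qed.
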